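(* Let $f(x)=\ln(e-x)$ for $0\le x\le e-1$ and $f(x)=0$ for $x>e-1$. For every instance, if $r^\star$ is the stopping rate of $\mathrm{EnvyFree}(f)$ computed from the true costs, then $\sum_{i\in S}u_if_{r^\star}(c_i/u_i)\ge(1-1/e)U^\star$.
   Context: Setting: a buyer with budget $B>0$ faces a finite set $S$ of sellers; seller $i$ owns one divisible item giving utility $u_i>0$ and has cost $c_i\ge0$; buying fraction $x_i\in[0,1]$ costs $x_ic_i$ and gives utility $x_iu_i$. $U^\star=\max\{\sum_iu_i\alpha_i:\alpha\in[0,1]^S,\sum_ic_i\alpha_i\le B\}$. For $r>0$: $f_r(x)=f(x/r)$, $Q_r(x)=xf_r(x)+\int_x^\infty f_r(y)\,dy$, $P_{i,r}(x)=u_iQ_r(x/u_i)$. The stopping rate $r^\star$ of $\mathrm{EnvyFree}(f)$ on cost vector $c$ is the value at which, decreasing $r$ from $\infty$, the nondecreasing continuous function $r\mapsto\sum_iP_{i,r}(c_i)$ first equals $B$; $\mathrm{EnvyFree}(f)$ buys $f_{r^\star}(c_i/u_i)$ of item $i$ and pays $P_{i,r^\star}(c_i)$. *)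

(* Defs.v *)
From Stdlib Require Import Reals.
From Coquelicot Require Import Coquelicot.
Open Scope R_scope.

Definition fEF (x : R) : R := if Rle_dec x (exp 1 - 1) then ln (exp 1 - x) else 0.

Definition f_r (f : R -> R) (r x : R) : R := f (x / r).

Definition Q_r (f : R -> R) (r x : R) : R :=
  x * f_r f r x + RInt_gen (f_r f r) (at_point x) (Rbar_locally p_infty).

Definition P_r (f : R -> R) (ui r x : R) : R := ui * Q_r f r (x / ui).

Fixpoint rsum (n : nat) (g : nat -> R) : R :=
  match n with O => 0 | S k => rsum k g + g k end.

Definition total_pay (f : R -> R) (n : nat) (u c : nat -> R) (r : R) : R :=
  rsum n (fun i => P_r f (u i) r (c i)).

(* r* is the stopping rate of EnvyFree(f): decreasing r from +oo, the first
   value at which the total payment equals B. *)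
Definition stopping_rate (f : R -> R) (n : nat) (u c : nat -> R) (B rs : R) : Prop :=
  0 < rs /\ total_pay f n u c rs = B /\
  (forall r, rs < r -> total_pay f n u c r <> B).

Definition feasible (n : nat) (c : nat -> R) (B : R) (alpha : nat -> R) : Prop :=
  (forall i, (i < n)%nat -> 0 <= alpha i <= 1) /\ rsum n (fun i => c i * alpha i) <= B.

(* Main.v *)
Require Import Defs.
From Stdlib Require Import Reals Lra.
From Coquelicot Require Import Coquelicot.
Open Scope R_scope.

Lemma exp1_gt1 : 1 < exp 1.
Proof. rewrite <- exp_0 at 1. apply exp_increasing. apply Rlt_0_1. Qed.

Definition Gp (r y : R) : R := - r * ((exp 1 - y / r) * ln (exp 1 - y / r) - (exp 1 - y / r)).

Lemma Gp_deriv (r y : R) : 0 < r -> y <= r * (exp 1 - 1) ->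
  is_derive (Gp r) y (ln (exp 1 - y / r)).
Proof.
  intros Hr Hy.
  assert (H1 : 1 <= exp 1 - y / r).
  { assert (y / r <= exp 1 - 1). { apply Rmult_le_reg_l with r; auto. field_simplify; lra. }
    lra. }
  unfold Gp. auto_derive.
  - lra.
  - replace (exp 1 + - (y * / r)) with (exp 1 - y / r) by (unfold Rdiv, Rminus; ring).
    set (L := ln (exp 1 - y / r)). field. split; lra.
Qed.

Lemma int_part (r x b : R) : 0 < r -> 0 <= x -> x <= r * (exp 1 - 1) -> r * (exp 1 - 1) < b ->
  is_RInt (f_r fEF r) x b (Gp r (r * (exp 1 - 1)) - Gp r x).
Proof.
  intros Hr Hx HxM HMb.
  replace (Gp r (r * (exp 1 - 1)) - Gp r x) with
    (plus (minus (Gp r (r * (exp 1 - 1))) (Gp r x)) (scal (b - r * (exp 1 - 1)) 0)).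
  2:{ unfold plus, minus, opp, scal; simpl. unfold mult; simpl. rewrite Rmult_0_r, Rplus_0_r. reflexivity. }
  apply (@is_RInt_Chasles R_NormedModule) with (r * (exp 1 - 1)).
  - apply is_RInt_ext with (fun y => ln (exp 1 - y / r)).
    + intros y Hy. rewrite Rmin_left in Hy by lra. rewrite Rmax_right in Hy by lra.
      unfold f_r, fEF. destruct (Rle_dec (y / r) (exp 1 - 1)) as [_|Hn]; auto.
      exfalso; apply Hn. apply Rmult_le_reg_l with r; auto. field_simplify; lra.
    + apply (@is_RInt_derive R_CompleteNormedModule (Gp r)).
      * intros y Hy. rewrite Rmin_left in Hy by lra. rewrite Rmax_right in Hy by lra.
        apply Gp_deriv; lra.
      * intros y Hy. rewrite Rmin_left in Hy by lra. rewrite Rmax_right in Hy by lra.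
        assert (1 <= exp 1 - y / r).
        { assert (y / r <= exp 1 - 1). { apply Rmult_le_reg_l with r; auto. field_simplify; lra. }
          lra. }
        apply (ex_derive_continuous (K:=R_AbsRing) (V:=R_NormedModule)). auto_derive. lra.
  - apply is_RInt_ext with (fun _ => 0).
    + intros y Hy. rewrite Rmin_left in Hy by lra. rewrite Rmax_right in Hy by lra.
      unfold f_r, fEF. destruct (Rle_dec (y / r) (exp 1 - 1)) as [Hl|]; auto.
      exfalso. assert (r * (exp 1 - 1) >= y); [|lra].
      apply Rmult_le_compat_l with (r := r) in Hl; [|lra].
      field_simplify in Hl; lra.
    + apply (@is_RInt_const R_NormedModule).
Qed.

Definition Jv (r x : R) : R :=
  if Rle_dec x (r * (exp 1 - 1)) then Gp r (r * (exp 1 - 1)) - Gp r x else 0.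

Lemma gen_val (r x : R) : 0 < r -> 0 <= x ->
  RInt_gen (f_r fEF r) (at_point x) (Rbar_locally p_infty) = Jv r x.
Proof.
  intros Hr Hx.
  apply (@is_RInt_gen_unique R_CompleteNormedModule);
    [apply Proper_StrongProper, at_point_filter | apply Proper_StrongProper, Rbar_locally_filter |].
  unfold is_RInt_gen, filterlimi, filter_le, filtermapi.
  intros P HP.
  apply Filter_prod with (fun a => a = x) (fun b => Rmax x (r * (exp 1 - 1)) < b).
  - reflexivity.
  - exists (Rmax x (r * (exp 1 - 1))). auto.
  - intros a b -> Hb. simpl. exists (Jv r x). split; [| apply locally_singleton; auto].
    assert (H1 := Rmax_l x (r * (exp 1 - 1))).
    assert (H2 := Rmax_r x (r * (exp 1 - 1))).
    unfold Jv. destruct (Rle_dec x (r * (exp 1 - 1))) as [Hl|Hn].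
    + apply int_part; lra.
    + replace 0 with (scal (b - x) 0) by (unfold scal; simpl; unfold mult; simpl; ring).
      apply is_RInt_ext with (fun _ => 0).
      * intros y Hy. rewrite Rmin_left in Hy by lra. rewrite Rmax_right in Hy by lra.
        unfold f_r, fEF. destruct (Rle_dec (y / r) (exp 1 - 1)) as [Hl|]; auto.
        exfalso. assert (r * (exp 1 - 1) >= y); [|lra].
        apply Rmult_le_compat_l with (r := r) in Hl; [|lra].
        field_simplify in Hl; lra.
      * apply (@is_RInt_const R_NormedModule).
Qed.

Lemma rsum_le n g h : (forall i, (i < n)%nat -> g i <= h i) -> rsum n g <= rsum n h.
Proof.
  induction n; simpl; intros H. lra.
  assert (rsum n g <= rsum n h) by (apply IHn; intros; apply H; auto).
  assert (g n <= h n) by (apply H; auto). lra.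
Qed.

Lemma rsum_minus n g h : rsum n (fun i => g i - h i) = rsum n g - rsum n h.
Proof. induction n; simpl. ring. rewrite IHn. ring. Qed.

Lemma rsum_scal n k g : rsum n (fun i => k * g i) = k * rsum n g.
Proof. induction n; simpl. ring. rewrite IHn. ring. Qed.

Lemma rsum_scalr n k g : rsum n (fun i => g i * k) = rsum n g * k.
Proof. induction n; simpl. ring. rewrite IHn. ring. Qed.

Lemma seller (u c a r : R) : 0 < u -> 0 <= c -> 0 <= a <= 1 -> 0 < r ->
  (1 - 1 / exp 1) * (u * a) - u * f_r fEF r (c / u)
    <= (c * a - P_r fEF u r c) * / (exp 1 * r).
Proof.
  intros Hu Hc Ha Hr.
  assert (HE := exp1_gt1).
  assert (Hx : 0 <= c / u) by (apply Rdiv_le_0_compat; lra).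
  unfold P_r, Q_r. rewrite gen_val by auto.
  unfold Jv, f_r, fEF.
  set (x := c / u) in *.
  assert (Hc' : c = u * x) by (unfold x; field; lra).
  rewrite Hc'.
  destruct (Rle_dec x (r * (exp 1 - 1))) as [H1|H1];
  destruct (Rle_dec (x / r) (exp 1 - 1)) as [H2|H2].
  - unfold Gp.
    replace (exp 1 - r * (exp 1 - 1) / r) with 1 by (field; lra).
    rewrite ln_1.
    set (L := ln (exp 1 - x / r)).
    assert (Hs : x / r + 1 <= exp 1) by lra.
    assert (K : (u * x * a - u * (x * L + (- r * (1 * 0 - 1) - - r * ((exp 1 - x / r) * L - (exp 1 - x / r))))) * / (exp 1 * r)
       - ((1 - 1 / exp 1) * (u * a) - u * L) = u * (1 - a) * (exp 1 - x / r - 1) / exp 1)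
      by (field; lra).
    assert (0 <= u * (1 - a) * (exp 1 - x / r - 1) / exp 1).
    { apply Rdiv_le_0_compat; [|lra]. apply Rmult_le_pos; [apply Rmult_le_pos|]; lra. }
    lra.
  - exfalso. apply H2. apply Rmult_le_reg_l with r; auto. field_simplify; lra.
  - exfalso. apply H1. apply Rmult_le_compat_l with (r := r) in H2; [|lra].
    field_simplify in H2; lra.
  - assert (K : (u * x * a - u * (x * 0 + 0)) * / (exp 1 * r)
       - ((1 - 1 / exp 1) * (u * a) - u * 0) = u * a * (x - r * (exp 1 - 1)) / (exp 1 * r))
      by (field; lra).
    assert (0 <= u * a * (x - r * (exp 1 - 1)) / (exp 1 * r)).
    { apply Rdiv_le_0_compat; [|apply Rmult_lt_0_compat; lra].
      apply Rmult_le_pos; [apply Rmult_le_pos|]; lra. }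
    lra.
Qed.

Theorem lemma4 (n : nat) (u c : nat -> R) (B rs : R) :
  0 < B ->
  (forall i, (i < n)%nat -> 0 < u i) ->
  (forall i, (i < n)%nat -> 0 <= c i) ->
  stopping_rate fEF n u c B rs ->
  forall alpha : nat -> R, feasible n c B alpha ->
    rsum n (fun i => u i * f_r fEF rs (c i / u i))
      >= (1 - 1 / exp 1) * rsum n (fun i => u i * alpha i).
Proof.
  intros HB Hu Hc [Hr [Hpay _]] alpha [Ha Hfeas].
  assert (HE := exp1_gt1).
  assert (S := rsum_le n (fun i => (1 - 1 / exp 1) * (u i * alpha i) - u i * f_r fEF rs (c i / u i))
     (fun i => (c i * alpha i - P_r fEF (u i) rs (c i)) * / (exp 1 * rs))).
  assert (S' := S (fun i Hi => seller (u i) (c i) (alpha i) rs (Hu i Hi) (Hc i Hi) (Ha i Hi) Hr)).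
  clear S.
  rewrite rsum_minus, rsum_scal in S'.
  rewrite (rsum_scalr n (/ (exp 1 * rs)) (fun i => c i * alpha i - P_r fEF (u i) rs (c i))) in S'.
  rewrite (rsum_minus n (fun i => c i * alpha i) (fun i => P_r fEF (u i) rs (c i))) in S'.
  unfold total_pay in Hpay. rewrite Hpay in S'.
  assert (0 < / (exp 1 * rs)) by (apply Rinv_0_lt_compat; apply Rmult_lt_0_compat; lra).
  assert ((rsum n (fun i => c i * alpha i) - B) * / (exp 1 * rs) <= 0).
  { apply Rmult_le_0_r; lra. }
  lra.
Qed.
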